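(* Let $A$ be an associative unital algebra over a commutative ring $k$ and $B$ a subalgebra with $L(A)\subseteq B\subseteq\mathrm{End}_k(A)$ such that $A^B\subseteq Z(A)$ (the centre of $A$). Then $A$ is a critically compressible left $B$-module if and only if $A^B$ is an integral domain and large in $A$.
   Context: $L(A)=\{L_a:a\in A\}$, $L_a(x)=ax$; $A$ is a left $B$-module via $\varphi\cdot a=\varphi(a)$. $A^B=\{a\in A: b\cdot a=(b\cdot1)a\ \forall b\in B\}\cong\mathrm{End}_B(A)$. $A^B$ is large in $A$ if $A^B\cap I\neq 0$ for every nonzero $B$-stable left ideal $I$ of $A$. A nonzero module is critically compressible if it embeds into each of its nonzero submodules and into none of its factor modules $M/N$ with $N\neq0$. *)

(* Defs.v *)
From HB Require Import structures.
From mathcomp Require Import all_boot all_order all_algebra.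
Set Implicit Arguments. Unset Strict Implicit. Unset Printing Implicit Defensive.
Import GRing.Theory.
Local Open Scope ring_scope.

Section Defs.
Variables (k : comPzRingType) (A : algType k).

Definition Lmul (a : A) : A -> A := fun x => a * x.

Definition klinear (f : A -> A) : Prop :=
  forall (c : k) (x y : A), f (c *: x + y) = c *: f x + f y.

Definition is_subalg_End (B : (A -> A) -> Prop) : Prop :=
  (forall f, B f -> klinear f) /\
  B (fun x => x) /\
  B (fun _ => 0) /\
  (forall f g, B f -> B g -> B (fun x => f x + g x)) /\
  (forall f, B f -> B (fun x => - f x)) /\
  (forall c f, B f -> B (fun x => c *: f x)) /\
  (forall f g, B f -> B g -> B (fun x => f (g x))).

Definition contains_L (B : (A -> A) -> Prop) : Prop := forall a : A, B (Lmul a).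

Definition invariants (B : (A -> A) -> Prop) (a : A) : Prop :=
  forall b, B b -> b a = b 1 * a.

Definition centre (a : A) : Prop := forall x : A, a * x = x * a.

Definition is_Bsubmod (B : (A -> A) -> Prop) (N : A -> Prop) : Prop :=
  [/\ N 0, (forall x y, N x -> N y -> N (x + y)) &
      (forall b x, B b -> N x -> N (b x))].

Definition is_Bstable_left_ideal (B : (A -> A) -> Prop) (I : A -> Prop) : Prop :=
  [/\ I 0, (forall x y, I x -> I y -> I (x + y)),
      (forall x, I x -> I (- x)),
      (forall a x, I x -> I (a * x)) &
      (forall b x, B b -> I x -> I (b x))].

Definition nonzero_set (N : A -> Prop) : Prop := exists x, N x /\ x <> 0.

Definition Bhom (B : (A -> A) -> Prop) (f : A -> A) : Prop :=
  (forall x y, f (x + y) = f x + f y) /\ (forall b x, B b -> f (b x) = b (f x)).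

Definition embeds_into_sub (B : (A -> A) -> Prop) (N : A -> Prop) : Prop :=
  exists f, [/\ Bhom B f, injective f & forall x, N (f x)].

(* A embeds into the factor module A/N: an injective B-linear map A -> A/N,
   described through a choice of representatives g : A -> A. *)
Definition embeds_into_quot (B : (A -> A) -> Prop) (N : A -> Prop) : Prop :=
  exists g : A -> A,
    [/\ (forall x y, N (g (x + y) - (g x + g y))),
        (forall b x, B b -> N (g (b x) - b (g x))) &
        (forall x, N (g x) -> x = 0)].

Definition critically_compressible (B : (A -> A) -> Prop) : Prop :=
  [/\ exists x : A, x <> 0,
      (forall N, is_Bsubmod B N -> nonzero_set N -> embeds_into_sub B N) &
      (forall N, is_Bsubmod B N -> nonzero_set N -> ~ embeds_into_quot B N)].

Definition is_integral_domain (S : A -> Prop) : Prop :=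
  [/\ (forall x y, S x -> S y -> x * y = y * x),
      (1 : A) <> 0 &
      (forall x y, S x -> S y -> x * y = 0 -> x = 0 \/ y = 0)].

Definition large_in (B : (A -> A) -> Prop) (S : A -> Prop) : Prop :=
  forall I, is_Bstable_left_ideal B I -> nonzero_set I ->
    exists x, S x /\ I x /\ x <> 0.

End Defs.

(* Main.v *)
Require Import Defs.
From HB Require Import structures.
From mathcomp Require Import all_boot all_order all_algebra.
Set Implicit Arguments. Unset Strict Implicit. Unset Printing Implicit Defensive.
Import GRing.Theory.
Local Open Scope ring_scope.

Section Helpers.
Variables (k : comPzRingType) (A : algType k) (B : (A -> A) -> Prop).
Hypothesis hB : is_subalg_End B.
Hypothesis hL : contains_L B.

Lemma Bzero b : B b -> b 0 = 0.
Proof.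
move=> Bb; case: hB => hlin _.
have := hlin b Bb 1 0 0; rewrite !scale1r addr0 => e.
by symmetry; apply: (@addrI _ (b 0)); rewrite addr0; exact: e.
Qed.

Lemma Bneg : B (fun x => - x).
Proof. by case: hB => _ [hid [_ [_ [hopp _]]]]; apply: hopp. Qed.

Lemma inv_mul c b x : invariants B c -> B b -> b (x * c) = b x * c.
Proof.
move=> hc Bb; case: hB => _ [_ [_ [_ [_ [_ hcomp]]]]].
have := hc _ (hcomp b (Lmul x) Bb (hL x)); rewrite /Lmul mulr1 => ->; done.
Qed.

Lemma sub_neg N x : is_Bsubmod B N -> N x -> N (- x).
Proof. by case=> _ _ hb Nx; apply: (hb _ _ Bneg Nx). Qed.

Lemma sub_lmul N a x : is_Bsubmod B N -> N x -> N (a * x).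
Proof. by case=> _ _ hb Nx; apply: (hb _ _ (hL a) Nx). Qed.

Lemma sub_ideal N : is_Bsubmod B N -> is_Bstable_left_ideal B N.
Proof.
move=> hN; case: (hN) => h0 hadd hb; split=> //.
- by move=> x; apply: sub_neg.
- by move=> a x; apply: sub_lmul.
Qed.

Lemma hom_form f a : Bhom B f -> f a = a * f 1.
Proof.
case=> _ hf; have := hf (Lmul a) 1 (hL a); rewrite /Lmul mulr1 => ->; done.
Qed.

Lemma hom_inv f : Bhom B f -> invariants B (f 1).
Proof.
move=> hf b Bb; have [_ h] := hf; rewrite -(h b 1 Bb); exact: hom_form.
Qed.

Lemma hom0 f : Bhom B f -> f 0 = 0.
Proof.
case=> ha _; have := ha 0 0; rewrite addr0 => e.
by symmetry; apply: (@addrI _ (f 0)); rewrite addr0; exact: e.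
Qed.

Lemma ann_sub y : invariants B y -> is_Bsubmod B (fun a => a * y = 0).
Proof.
move=> hy; split.
- by rewrite mul0r.
- by move=> x z hx hz; rewrite mulrDl hx hz addr0.
- by move=> b x Bb hx; rewrite -inv_mul // hx Bzero.
Qed.

Lemma img_sub y : invariants B y -> is_Bsubmod B (fun a => exists d, a = d * y).
Proof.
move=> hy; split.
- by exists 0; rewrite mul0r.
- by move=> x z [d ->] [e ->]; exists (d + e); rewrite mulrDl.
- by move=> b x Bb [d ->]; exists (b d); rewrite inv_mul.
Qed.

End Helpers.

Theorem corollary3p5 (k : comPzRingType) (A : algType k) (B : (A -> A) -> Prop)
  (hB : is_subalg_End B) (hL : contains_L B)
  (hZ : forall a, invariants B a -> centre a) :
  critically_compressible B <->
  (is_integral_domain (invariants B) /\ large_in B (invariants B)).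
Proof.
split.
- case=> [[x0 x0n] h2 h3].
  have one_nz : (1 : A) <> 0.
    by move=> h; apply: x0n; rewrite -(mulr1 x0) h mulr0.
  have getc : forall N, is_Bsubmod B N -> nonzero_set N ->
      exists c, [/\ invariants B c, N c, c <> 0 & forall x, x * c = 0 -> x = 0].
    move=> N hN nzN; have [f [hf finj fN]] := h2 N hN nzN.
    exists (f 1); split.
    + exact: hom_inv.
    + exact: fN.
    + by move=> e; apply: one_nz; apply: finj; rewrite e (hom0 hf).
    + by move=> x e; apply: finj; rewrite (hom0 hf) (hom_form hL x hf).
  split; last first.
    move=> I hI nzI.
    have hN : is_Bsubmod B I by case: hI.
    have [c [? ? ? _]] := getc I hN nzI; by exists c.
  split=> //.
  + by move=> x y hx _; apply: hZ.
  + move=> x y hx hy e.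
    case: (boolP (x == 0)) => [/eqP|/eqP xn]; first by left.
    case: (boolP (y == 0)) => [/eqP|/eqP yn]; first by right.
    exfalso.
    have hK := ann_sub hB hL hy.
    have hI := img_sub hB hL hy.
    have [c [hc [d cd] cn cinj]] := getc _ hI (ex_intro _ y (conj (ex_intro _ 1 (esym (mul1r y))) yn)).
    apply: (h3 _ hK (ex_intro _ x (conj e xn))).
    exists (fun z => z * d); split.
    * move=> u v /=; have ->: (u+v)*d = u*d+v*d by rewrite mulrDl.
      by rewrite subrr mul0r.
    * move=> b u Bb /=; rewrite mulrBl -mulrA -cd -(inv_mul hB hL _ hy Bb).
      by rewrite -mulrA -cd (inv_mul hB hL _ hc Bb) subrr.
    * by move=> u /=; rewrite -mulrA -cd; apply: cinj.
- case=> [[hcomm one_nz hdom] hlarge]; split.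
  + by exists 1.
  + move=> N hN nzN.
    have := hlarge N (sub_ideal hB hL hN) nzN. move=> [c [hc [Nc cn]]].
    exists (fun x => x * c); split.
    * split; first by move=> x y; rewrite mulrDl.
      by move=> b x Bb; rewrite (inv_mul hB hL _ hc Bb).
    * move=> x y /eqP; rewrite -subr_eq0 -mulrBl => /eqP e.
      apply/eqP; rewrite -subr_eq0; apply/eqP.
      case: (boolP (x - y == 0)) => [/eqP //|/eqP nz].
      have hJ := ann_sub hB hL hc.
      have [d [hd [Jd dn]]] := hlarge _ (sub_ideal hB hL hJ) (ex_intro _ (x - y) (conj e nz)).
      by case: (hdom d c hd hc Jd).
    * by move=> x; apply: (sub_lmul hL).
  + move=> N hN nzN [g [_ hg hg0]].
    have [c [hc [Nc cn]]] := hlarge N (sub_ideal hB hL hN) nzN.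
    apply: cn; apply: hg0.
    have e1 := hg (Lmul c) 1 (hL c); rewrite /Lmul mulr1 in e1.
    have e2 : N (c * g 1) by rewrite hZ //; apply: (sub_lmul hL).
    case: hN => _ hadd _.
    by have := hadd _ _ e1 e2; rewrite subrK.
Qed.
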